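(* $\mathrm{PL}$ and $\mathrm{ML}$ (in team semantics) admit counter-model merging: for arbitrary sets $\Gamma,\Delta$ of formulas of the logic, if for every $\delta\in\Delta$ there is a valuation satisfying all of $\Gamma$ and not satisfying $\delta$, then there is a single valuation satisfying all of $\Gamma$ and not satisfying any $\delta\in\Delta$.
   Context: $\mathrm{PL}$: formulas built from a countably infinite set of atoms with $\neg,\to$; a valuation is a team $T$, a (possibly empty) set of assignments of truth values to the atoms, and $T\models\alpha$ iff every $s\in T$ satisfies $\alpha$ classically. $\mathrm{ML}$: formulas built from atoms with $\neg,\to,\Box$; a valuation is a pair $(\mathcal K,T)$ with $\mathcal K=(W,R,V)$ a Kripke structure and $T\subseteq W$, and $(\mathcal K,T)\models\alpha$ iff $(\mathcal K,w)\models\alpha$ in standard Kripke semantics for all $w\in T$. *)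

(* Defs.v *)
Inductive pl_form : Type :=
| PAtom : nat -> pl_form
| PNeg  : pl_form -> pl_form
| PImp  : pl_form -> pl_form -> pl_form.

Definition assignment := nat -> bool.

Fixpoint pl_sat (s : assignment) (a : pl_form) : Prop :=
  match a with
  | PAtom p => s p = true
  | PNeg b => ~ pl_sat s b
  | PImp b c => pl_sat s b -> pl_sat s c
  end.

Definition pl_team := assignment -> Prop.

Definition pl_team_sat (T : pl_team) (a : pl_form) : Prop :=
  forall s, T s -> pl_sat s a.

Inductive ml_form : Type :=
| MAtom : nat -> ml_form
| MNeg  : ml_form -> ml_form
| MImp  : ml_form -> ml_form -> ml_form
| MBox  : ml_form -> ml_form.

Fixpoint ml_sat {W : Type} (R : W -> W -> Prop) (V : nat -> W -> Prop)
  (w : W) (a : ml_form) : Prop :=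
  match a with
  | MAtom p => V p w
  | MNeg b => ~ ml_sat R V w b
  | MImp b c => ml_sat R V w b -> ml_sat R V w c
  | MBox b => forall v, R w v -> ml_sat R V v b
  end.

Definition ml_team_sat {W : Type} (R : W -> W -> Prop) (V : nat -> W -> Prop)
  (T : W -> Prop) (a : ml_form) : Prop :=
  forall w, T w -> ml_sat R V w a.

Definition pl_counter_model_merging : Prop :=
  forall (Gamma Delta : pl_form -> Prop),
    (forall d, Delta d ->
       exists T : pl_team,
         (forall g, Gamma g -> pl_team_sat T g) /\ ~ pl_team_sat T d) ->
    exists T : pl_team,
      (forall g, Gamma g -> pl_team_sat T g) /\
      (forall d, Delta d -> ~ pl_team_sat T d).

(* Counter-model merging for ML: valuations are pairs (K, T) with
   K = (W, R, V) an arbitrary Kripke structure and T a subset of W. *)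
Definition ml_counter_model_merging : Prop :=
  forall (Gamma Delta : ml_form -> Prop),
    (forall d, Delta d ->
       exists (W : Type) (R : W -> W -> Prop) (V : nat -> W -> Prop) (T : W -> Prop),
         (forall g, Gamma g -> ml_team_sat R V T g) /\ ~ ml_team_sat R V T d) ->
    exists (W : Type) (R : W -> W -> Prop) (V : nat -> W -> Prop) (T : W -> Prop),
      (forall g, Gamma g -> ml_team_sat R V T g) /\
      (forall d, Delta d -> ~ ml_team_sat R V T d).

(* Main.v *)
Require Import Defs.
From Stdlib Require Import ClassicalEpsilon.

Definition uR {I : Type} (W : I -> Type) (R : forall i, W i -> W i -> Prop)
  (x y : sigT W) : Prop :=
  match x, y with
  | existT _ i w, existT _ j v => exists e : j = i, R i w (eq_rect j W v i e)
  end.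

Definition uV {I : Type} (W : I -> Type) (V : forall i, nat -> W i -> Prop)
  (p : nat) (x : sigT W) : Prop :=
  match x with existT _ i w => V i p w end.

Lemma union_sat {I : Type} (W : I -> Type) R V (a : ml_form) :
  forall i w, ml_sat (uR W R) (uV W V) (existT W i w) a <-> ml_sat (R i) (V i) w a.
Proof.
  induction a; intros i w; simpl.
  - tauto.
  - rewrite IHa; tauto.
  - rewrite IHa1, IHa2; tauto.
  - split.
    + intros H v Hv. apply (IHa i v). apply H. simpl. exists eq_refl. exact Hv.
    + intros H [j v] [e He]. subst j. simpl in He. apply IHa. apply H. exact He.
Qed.

Theorem mainTheorem3 : pl_counter_model_merging /\ ml_counter_model_merging.
Proof.
  split.
  - intros Gamma Delta H.
    exists (fun s => exists T' : pl_team, (forall g, Gamma g -> pl_team_sat T' g) /\ T' s).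
    split.
    + intros g Hg s [T' [HT Hs]]. exact (HT g Hg s Hs).
    + intros d Hd Hsat. destruct (H d Hd) as [T [HG Hn]]. apply Hn.
      intros s Hs. apply Hsat. exists T. auto.
  - intros Gamma Delta H.
    set (I := { d : ml_form | Delta d }).
    assert (C : forall i : I, { M : { W : Type & ((W -> W -> Prop) * (nat -> W -> Prop) * (W -> Prop))%type } |
        let '(R, V, T) := projT2 M in
        (forall g, Gamma g -> ml_team_sat R V T g) /\ ~ ml_team_sat R V T (proj1_sig i) }).
    { intros [d Hd]. apply constructive_indefinite_description.
      destruct (H d Hd) as [W [R [V [T [H1 H2]]]]].
      exists (existT _ W (R, V, T)). simpl. auto. }
    set (Wf := fun i => projT1 (proj1_sig (C i))).
    set (Rf := fun i => fst (fst (projT2 (proj1_sig (C i))))).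
    set (Vf := fun i => snd (fst (projT2 (proj1_sig (C i))))).
    set (Tf := fun i => snd (projT2 (proj1_sig (C i)))).
    assert (P : forall i : I, (forall g, Gamma g -> ml_team_sat (Rf i) (Vf i) (Tf i) g)
                      /\ ~ ml_team_sat (Rf i) (Vf i) (Tf i) (proj1_sig i)).
    { intros i. unfold Rf, Vf, Tf. destruct (C i) as [[W [[R V] T]] HM]. simpl. exact HM. }
    exists (sigT Wf), (uR Wf Rf), (uV Wf Vf),
      (fun x => match x with existT _ i w => Tf i w end).
    split.
    + intros g Hg [i w] Hw. apply union_sat. apply (proj1 (P i) g Hg w Hw).
    + intros d Hd Hsat. apply (proj2 (P (exist _ d Hd))).
      intros w Hw. simpl. apply (union_sat Wf Rf Vf d (exist _ d Hd) w).
      apply Hsat. exact Hw.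
Qed.
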